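(* Let $a_1<a_2$ and $b_1<b_2$ be real numbers, and for $i=1,2$ let $R_i$ be the open line segment from $(-1,2a_i,a_i)$ to $(1,-2b_i,b_i)$ in $\mathbb{H}$. Then there is no horizontal line that contains both a point of $R_1$ and a point of $R_2$.
   Context: $\mathbb{H}$ is $\mathbb{R}^3$ with product $(x,y,z)\cdot(x',y',z')=(x+x',y+y',z+z'+\frac{xy'-yx'}{2})$. A horizontal line is a set $\{p\cdot tv:t\in\mathbb{R}\}$ with $p\in\mathbb{H}$ and $v=(a,b,0)\neq0$. *)

(* Defs.v *)
From Stdlib Require Import Reals.
Open Scope R_scope.

Definition H := (R * R * R)%type.

Definition pt (x y z : R) : H := (x, y, z).

Definition hmul (p q : H) : H :=
  match p, q with
  | (x, y, z), (x', y', z') => (x + x', y + y', z + z' + (x * y' - y * x') / 2)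
  end.

Definition horizontal_line (L : H -> Prop) : Prop :=
  exists (p : H) (a b : R), (a <> 0 \/ b <> 0) /\
    forall q : H, L q <-> exists t : R, q = hmul p (t * a, t * b, 0).

Definition open_segment (P Q : H) (q : H) : Prop :=
  match P, Q with
  | (x1, y1, z1), (x2, y2, z2) =>
    exists s : R, 0 < s < 1 /\
      q = ((1 - s) * x1 + s * x2, (1 - s) * y1 + s * y2, (1 - s) * z1 + s * z2)
  end.

Definition Rseg (a b : R) : H -> Prop :=
  open_segment (-1, 2 * a, a) (1, -2 * b, b).

(* Main.v *)
Require Import Defs.
From Stdlib Require Import Reals Lra Psatz.
Open Scope R_scope.

Theorem lemma6p1 (a1 a2 b1 b2 : R) (ha : a1 < a2) (hb : b1 < b2) :
  ~ (exists L : H -> Prop, horizontal_line L /\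
       (exists q1, L q1 /\ Rseg a1 b1 q1) /\
       (exists q2, L q2 /\ Rseg a2 b2 q2)).
Proof.
  intros [L [[p [a [b [hab HL]]]] [[q1 [L1 S1]] [q2 [L2 S2]]]]].
  apply HL in L1 as [t1 E1]. apply HL in L2 as [t2 E2].
  destruct p as [[p1 p2] p3].
  unfold Rseg, open_segment in S1, S2.
  destruct S1 as [s [Hs F1]]. destruct S2 as [r [Hr F2]].
  rewrite F1 in E1. rewrite F2 in E2. unfold hmul in E1, E2.
  injection E1 as X1 Y1 Z1. injection E2 as X2 Y2 Z2.
  set (x1 := (1 - s) * -1 + s * 1) in *.
  set (y1 := (1 - s) * (2 * a1) + s * (-2 * b1)) in *.
  set (z1 := (1 - s) * a1 + s * b1) in *.
  set (x2 := (1 - r) * -1 + r * 1) in *.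
  set (y2 := (1 - r) * (2 * a2) + r * (-2 * b2)) in *.
  set (z2 := (1 - r) * a2 + r * b2) in *.
  assert (K : 2 * (z2 - z1) = x1 * y2 - y1 * x2).
  { rewrite X1, Y1, Z1, X2, Y2, Z2. field. }
  assert (K2 : 2 * (z2 - z1) - (x1 * y2 - y1 * x2)
     = 4 * ((a2 - a1) * ((1 - r) * (1 - s)) + (b2 - b1) * (r * s))).
  { unfold x1, y1, z1, x2, y2, z2. ring. }
  assert (P1 : 0 < (1 - r) * (1 - s)) by (apply Rmult_lt_0_compat; lra).
  assert (P2 : 0 < r * s) by (apply Rmult_lt_0_compat; lra).
  assert (P3 : 0 < (a2 - a1) * ((1 - r) * (1 - s))) by (apply Rmult_lt_0_compat; lra).
  assert (P4 : 0 < (b2 - b1) * (r * s)) by (apply Rmult_lt_0_compat; lra).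
  lra.
Qed.
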